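(* Let $q\in\mathbb{N}$ be odd and square-free. Then for any fixed $\varepsilon>0$, \[\widehat{B}_3(q)\ll_{\varepsilon}q^{\varepsilon}\,\widehat{B}_2(q),\] the implied constant depending only on $\varepsilon$.
   Context: For an integral quadratic form $Q$ in $n$ variables, $\widehat{m}(Q;q):=\min\{\|\mathbf{x}\|:\ \mathbf{x}\in\mathbb{Z}^n\setminus\{\mathbf{0}\},\ \exists t\in\mathbb{Z},\ Q(\mathbf{x})\equiv t^2\pmod q\}$, with $\|\cdot\|$ the Euclidean norm, and $\widehat{B}_n(q):=\max_Q\widehat{m}(Q;q)$, the maximum over all integral quadratic forms $Q$ in $n$ variables with $\gcd(\det(Q),q)=1$. Since $q$ is odd, $Q$ is represented modulo $q$ by a symmetric integer matrix $M$ with $Q(\mathbf{x})\equiv\mathbf{x}^TM\mathbf{x}\pmod q$, and $\det(Q)$ means $\det(M)$. *)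

(* Defs.v *)
From HB Require Import structures.
From mathcomp Require Import all_boot all_order all_algebra.
From mathcomp Require Import all_classical all_reals exp.
Set Implicit Arguments. Unset Strict Implicit. Unset Printing Implicit Defensive.
Import Order.TTheory GRing.Theory Num.Theory.
Local Open Scope classical_set_scope.
Local Open Scope ring_scope.

Definition squarefree (q : nat) : Prop :=
  forall p : nat, prime p -> ~~ (p ^ 2 %| q)%N.

Definition qform (n : nat) (M : 'M[int]_n) (x : 'cV[int]_n) : int :=
  (x^T *m M *m x) 0 0.

Definition eucl_norm (R : realType) (n : nat) (x : 'cV[int]_n) : R :=
  Num.sqrt (\sum_(i < n) ((x i 0) ^+ 2)%:~R).

Definition mhat (R : realType) (n : nat) (M : 'M[int]_n) (q : nat) : R :=
  inf [set eucl_norm R x | x in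
        [set x : 'cV[int]_n | x != 0 /\
           exists t : int, (qform M x == t ^+ 2 %[mod q%:Z])%Z]].

Definition Bhat (R : realType) (n : nat) (q : nat) : R :=
  sup [set mhat R M q | M in
        [set M : 'M[int]_n | M^T = M /\ coprimez (\det M) q%:Z]].

(* Main.v *)
Require Import Defs.
From HB Require Import structures.
From mathcomp Require Import all_boot all_order all_algebra.
From mathcomp Require Import all_classical all_reals exp.
From mathcomp Require Import zify ring lra.
Import Order.TTheory GRing.Theory Num.Theory.

Module PA.

Section Sieve.
Variable bad : nat -> nat -> bool.

Definition good (ps : seq nat) (x : nat) := all (fun p => ~~ bad p x) ps.
Definition Gc ps s m N := (\sum_(j < N) good ps (s + m * j))%N.
Definition rho p := (\sum_(r < p) bad p r)%N.
Definition cnt N p r := ((N + p - 1 - r) %/ p)%N.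

Lemma cnt_bound N p r : (0 < p)%N -> (r < p)%N ->
  (cnt N p r * p <= N + p)%N /\ (N <= cnt N p r * p + p)%N.
Proof.
move=> p0 rp; rewrite /cnt; split.
  apply: leq_trans (leq_trunc_div _ _) _; lia.
have := ltn_ceil (N + p - 1 - r) p0; lia.
Qed.

Lemma split_sum (F : nat -> nat) p N : (0 < p)%N ->
  (\sum_(j < N) F j = \sum_(r < p) \sum_(i < cnt N p r) F (r + p * i))%N.
Proof.
move=> p0; elim: N => [|N IH].
  rewrite big_ord0 big1 // => r _.
  rewrite /cnt divn_small ?big_ord0 //; have := ltn_ord r; lia.
rewrite big_ord_recr /= IH.
have r0p : (N %% p < p)%N by rewrite ltn_pmod.
rewrite [in RHS](bigD1 (Ordinal r0p)) //= [in LHS](bigD1 (Ordinal r0p)) //=.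
rewrite -addnA [(_ + F N)%N]addnC addnA; congr (_ + _)%N; last first.
  apply: eq_bigr => r /eqP rne.
  have rp := ltn_ord r.
  have -> : (cnt N.+1 p r = cnt N p r)%N; last by [].
  rewrite /cnt.
  have -> : (N.+1 + p - 1 - r = (N + p - 1 - r).+1)%N by lia.
  rewrite divnS //.
  suff -> : (p %| (N + p - 1 - r).+1)%N = false by [].
  apply/negP => /dvdnP [k Hk].
  apply: rne; apply: val_inj => /=.
  have : (N + p - r = k * p)%N by lia.
  move=> Hk2.
  have : ((N + p) %% p = (k * p + r) %% p)%N by congr (_ %% _)%N; lia.
  by rewrite modnDr modnMDl (modn_small rp) => ->.
rewrite /cnt /=.
have -> : (N.+1 + p - 1 - N %% p = (N + p - 1 - N %% p).+1)%N by
  have := ltn_pmod N p0; lia.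
rewrite divnS // .
have dv : (p %| (N + p - 1 - N %% p).+1)%N.
  have -> : ((N + p - 1 - N %% p).+1 = (N %/ p).+1 * p)%N.
    have := divn_eq N p; have := ltn_pmod N p0; lia.
  by rewrite dvdn_mull.
rewrite dv add1n big_ord_recr /=; congr (_ + _)%N; congr (F _).
have : ((N + p - 1 - N %% p).+1 = (N %/ p).+1 * p)%N.
  have := divn_eq N p; have := ltn_pmod N p0; lia.
move=> H.
have -> : ((N + p - 1 - N %% p) %/ p = N %/ p)%N.
  have -> : (N + p - 1 - N %% p = N %/ p * p + (p - 1))%N.
    have := divn_eq N p; have := ltn_pmod N p0; lia.
  by rewrite divnMDl // [((p - 1) %/ p)%N]divn_small ?addn0 //; lia.
by rewrite addnC [(p * _)%N]mulnC -divn_eq.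
Qed.


Lemma sum_residue p s m : (0 < p)%N -> coprime m p ->
  (forall a, bad p a = bad p (a %% p)) ->
  (\sum_(r < p) bad p (s + m * r) = rho p)%N.
Proof.
move=> p0 cop per.
pose h (r : 'I_p) : 'I_p := Ordinal (ltn_pmod (s + m * r) p0).
have hinj : injective h.
  move=> r1 r2 /(congr1 val) /= /eqP.
  rewrite eqn_modDl => E; apply: val_inj => /=.
  have H1 := ltn_ord r1; have H2 := ltn_ord r2.
  wlog le21 : r1 r2 E H1 H2 / (r2 <= r1)%N.
    move=> W; case: (leqP r2 r1) => [|/ltnW] h21; first exact: W.
    by apply/esym/W => //; rewrite eq_sym.
  move: E; rewrite eqn_mod_dvd ?leq_mul2l ?le21 ?orbT // -mulnBr.
  rewrite Gauss_dvdr; last by rewrite coprime_sym.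
  move=> /dvdnP [k Hk].
  have : (k * p < p)%N by rewrite -Hk; lia.
  case: k Hk => [|k] Hk; first by lia.
  by rewrite mulSn; lia.
rewrite /rho [RHS](reindex_inj hinj); apply: eq_bigr => r _ /=.
by congr nat_of_bool; apply: per.
Qed.

Local Open Scope ring_scope.
Definition dens ps : rat := \prod_(p <- ps) (1 - (rho p)%:R / p%:R).

Definition sieve_ok (ps : seq nat) :=
  forall p, p \in ps -> [/\ prime p, (2 < p)%N, (rho p <= 2)%N &
                          forall a, bad p a = bad p (a %% p)].

Lemma dens_bounds ps : sieve_ok ps ->
  0 <= dens ps <= 1 /\ 1 <= dens ps * (3 ^ size ps)%:R.
Proof.
elim: ps => [|p ps IH] ok; first by rewrite /dens big_nil /= mul1r lexx; split=> //; lra.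
have [pr p2 r2 _] := ok p (mem_head _ _).
have [] := IH (fun q qin => ok q (mem_behead (qin : q \in behead (p :: ps)))).
rewrite /dens big_cons => /andP [d0 d1] d3.
set D := \prod_(_ <- _) _ in d0 d1 d3 *.
have pp : (0 : rat) < p%:R by rewrite ltr0n; lia.
have rp : (rho p)%:R / p%:R <= 2%:R / 3%:R :> rat.
  rewrite ler_pdivrMr // mulrAC ler_pdivlMr ?ltr0n //.
  by rewrite -!natrM ler_nat; lia.
have f0 : 0 <= 1 - (rho p)%:R / p%:R :> rat.
  rewrite subr_ge0; apply: le_trans rp _; rewrite ler_pdivrMr ?ltr0n //; lra.
have f1 : 1 - (rho p)%:R / p%:R <= 1 :> rat.
  rewrite lerBlDr lerDl; apply: divr_ge0; apply: ler0n.
split; first by rewrite mulr_ge0 //= mulr_ile1.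
rewrite /= expnS natrM.
have : 1 / 3 <= 1 - (rho p)%:R / p%:R :> rat by lra.
move=> f3.
have D3 : 0 <= (3 ^ size ps)%:R :> rat by apply: ler0n.
nra.
Qed.


Lemma sieve_ok_cons p ps : sieve_ok (p :: ps) -> sieve_ok ps.
Proof. by move=> ok q qin; apply: ok; rewrite in_cons qin orbT. Qed.

Lemma Gc_split p ps s m N : (0 < p)%N -> (forall a, bad p a = bad p (a %% p)) ->
  (Gc (p :: ps) s m N + \sum_(r < p) bad p (s + m * r) * Gc ps (s + m * r) (m * p) (cnt N p r)
   = Gc ps s m N)%N.
Proof.
move=> p0 per.
rewrite /Gc.
have -> : (\sum_(j < N) good ps (s + m * j) =
   \sum_(j < N) (~~ bad p (s + m * j) && good ps (s + m * j)) +
   \sum_(j < N) (bad p (s + m * j) && good ps (s + m * j)))%N.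
  rewrite -big_split; apply: eq_bigr => j _ /=.
  by case: (bad p _); case: (good ps _).
congr (_ + _)%N.
rewrite (@split_sum (fun j => bad p (s + m * j) && good ps (s + m * j)) p N p0).
apply: eq_bigr => r _.
have e : forall i, (s + m * (r + p * i) = (s + m * r) + (m * p) * i)%N.
  by move=> i; ring.
have hb : forall i, bad p (s + m * (r + p * i)) = bad p (s + m * r).
  move=> i; rewrite per [in RHS]per; congr (bad p _).
  rewrite e -modnDm (_ : (m * p * i) %% p = 0)%N ?addn0 ?modn_mod //.
  by rewrite mulnAC modnMl.
rewrite [in RHS](eq_bigr (fun i : 'I_(cnt N p r) => nat_of_bool (bad p (s + m * r) && good ps (s + m * r + m * p * i)))); last first.
  by move=> i _; rewrite hb e.
case: (bad p (s + m * r)) => /=.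
  by rewrite mul1n.
by rewrite mul0n big1.
Qed.

Theorem sieve ps : uniq ps -> sieve_ok ps -> forall s m N,
  (forall p, p \in ps -> coprime m p) ->
  `|(Gc ps s m N)%:R - N%:R * dens ps| <= (3 ^ size ps)%:R - 1 :> rat.
Proof.
elim: ps => [|p ps IH] /=.
  move=> _ _ s m N _.
  rewrite /Gc /dens big_nil /= sum_nat_const card_ord muln1 mulr1 subrr normr0.
  by rewrite subrr.
move=> /andP [pnin uq] ok s m N cop.
have [pr p2 r2 per] := ok p (mem_head _ _).
have okps := @sieve_ok_cons p ps ok.
have p0 : (0 < p)%N by lia.
have [/andP [D0 D1] _] := @dens_bounds ps okps.
set D := dens ps in D0 D1 *.
set E := (3 ^ size ps)%:R - 1 : rat.
have hG := @Gc_split p ps s m N p0 per.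
have -> : (Gc (p :: ps) s m N)%:R = (Gc ps s m N)%:R -
   \sum_(r < p) (bad p (s + m * r) * Gc ps (s + m * r) (m * p) (cnt N p r))%:R :> rat.
  by rewrite -hG natrD -natr_sum addrK.
have hrho : (rho p)%:R = \sum_(r < p) (bad p (s + m * r))%:R :> rat.
  by rewrite -natr_sum sum_residue // cop // mem_head.
have pp : (0 : rat) < p%:R by rewrite ltr0n.
have key : (Gc ps s m N)%:R -
   \sum_(r < p) (bad p (s + m * r) * Gc ps (s + m * r) (m * p) (cnt N p r))%:R
   - N%:R * dens (p :: ps) =
   ((Gc ps s m N)%:R - N%:R * D) -
   \sum_(r < p) (bad p (s + m * r))%:R *
      ((Gc ps (s + m * r) (m * p) (cnt N p r))%:R - N%:R * D / p%:R).
  rewrite /dens big_cons -/(dens ps) -/D.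
  under eq_bigr => r _ do rewrite natrM.
  under [in RHS]eq_bigr => r _ do rewrite mulrBr.
  rewrite sumrB -mulr_suml -hrho.
  field; lra.
rewrite key.
have hb : forall r : 'I_p, `|(bad p (s + m * r))%:R *
      ((Gc ps (s + m * r) (m * p) (cnt N p r))%:R - N%:R * D / p%:R)|
      <= (bad p (s + m * r))%:R * (1 + E) :> rat.
  move=> r.
  have copr : forall q, q \in ps -> coprime (m * p) q.
    move=> q qin; rewrite coprimeMl cop ?in_cons ?qin ?orbT //=.
    have [prq _ _ _] := okps q qin.
    rewrite prime_coprime // dvdn_prime2 //.
    by apply/eqP => epq; move: pnin; rewrite epq qin.
  have IHr := IH uq okps (s + m * r) (m * p) (cnt N p r) copr.
  have [c1 c2] := @cnt_bound N p r p0 (ltn_ord r).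
  have c1' : (cnt N p r)%:R * p%:R <= N%:R + p%:R :> rat by rewrite -natrM -natrD ler_nat.
  have c2' : N%:R <= (cnt N p r)%:R * p%:R + p%:R :> rat by rewrite -natrM -natrD ler_nat.
  have cd : `|(cnt N p r)%:R - N%:R / p%:R| <= 1 :> rat.
    have tN : N%:R / p%:R * p%:R = N%:R :> rat by field; lra.
    move: c1' c2' tN; rewrite ler_norml.
    set t := N%:R / p%:R; set c := (cnt N p r)%:R => c1' c2' tN.
    rewrite -tN in c1' c2'.
    apply/andP; split; nra.
  case: (bad p (s + m * r)) => /=; last by rewrite !mul0r normr0.
  rewrite !mul1r.
  have -> : (Gc ps (s + m * r) (m * p) (cnt N p r))%:R - N%:R * D / p%:R =
    ((Gc ps (s + m * r) (m * p) (cnt N p r))%:R - (cnt N p r)%:R * D) +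
    ((cnt N p r)%:R - N%:R / p%:R) * D by field; lra.
  apply: le_trans (ler_normD _ _) _.
  rewrite normrM (ger0_norm D0) addrC lerD //.
  by apply: le_trans (ler_pM _ _ cd D1) _ => //; rewrite mulr1.
apply: le_trans (ler_normB _ _) _.
have := IH uq okps s m N (fun q qin => cop q (mem_behead (qin : q \in behead (p :: ps)))).
move=> IH0.
apply: le_trans (lerD IH0 (le_trans (ler_norm_sum _ _ _) (ler_sum _ (fun r _ => hb r)))) _.
rewrite -mulr_suml -hrho.
have r2' : (rho p)%:R <= 2 :> rat by rewrite (ler_nat _ _ 2).
have E0 : 0 <= 1 + E by rewrite /E addrC subrK ler0n.
rewrite expnS natrM.
have -> : (3 ^ size ps)%:R = E + 1 :> rat by rewrite /E subrK.
nra.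
Qed.


Lemma sieve_exists ps : uniq ps -> sieve_ok ps ->
  exists j, (j < 9 ^ size ps)%N && good ps j.
Proof.
move=> uq ok.
have := @sieve ps uq ok 0 1 (9 ^ size ps) (fun p _ => coprime1n p).
have [/andP [D0 D1] D3] := @dens_bounds ps ok.
have -> : (9 ^ size ps)%:R = (3 ^ size ps)%:R * (3 ^ size ps)%:R :> rat.
  by rewrite -natrM -expnMn.
move=> H.
have G1 : (1 : rat) <= (Gc ps 0 1 (9 ^ size ps))%:R.
  move: H; rewrite ler_norml => /andP [H _].
  set c := (3 ^ size ps)%:R in D3 H; have c0 : 0 <= c by apply: ler0n. nra.
have : (0 < Gc ps 0 1 (9 ^ size ps))%N by rewrite -(ltr_nat rat); lra.
case: (pickP (fun j : 'I_(9 ^ size ps) => good ps j)) => [j Hj | none].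
  by move=> _; exists j; rewrite ltn_ord Hj.
rewrite /Gc big1 // => j _; rewrite add0n mul1n.
by rewrite none.
Qed.

End Sieve.

End PA.
Import PA.

Module PB.
Local Open Scope ring_scope.

Definition fpoly (c0 c1 c2 : int) (a : nat) : int := c0 + a%:Z * c1 + a%:Z ^+ 2 * c2.
Definition badf (c0 c1 c2 : int) (p a : nat) : bool := (p%:Z %| fpoly c0 c1 c2 a)%Z.

Lemma badf_F c0 c1 c2 p a : prime p ->
  badf c0 c1 c2 p a = (c0%:~R + a%:R * c1%:~R + a%:R ^+ 2 * c2%:~R == 0 :> 'F_p).
Proof.
move=> pr; rewrite /badf (dvdz_pcharf (pchar_Fp pr)) /fpoly.
by rewrite !rmorphD !rmorphM /= expr2.
Qed.

Lemma badf_per c0 c1 c2 p a : prime p -> badf c0 c1 c2 p a = badf c0 c1 c2 p (a %% p).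
Proof. by move=> pr; rewrite !badf_F // Fp_nat_mod. Qed.

Lemma badf_rho c0 c1 c2 p : prime p ->
  ~~ [&& (p%:Z %| c0)%Z, (p%:Z %| c1)%Z & (p%:Z %| c2)%Z] ->
  (\sum_(r < p) badf c0 c1 c2 p r <= 2)%N.
Proof.
move=> pr ndiv.
pose P : {poly 'F_p} := \poly_(i < 3) [:: c0%:~R; c1%:~R; c2%:~R]`_i.
have Pn0 : P != 0.
  apply: contra ndiv => /eqP P0.
  have h k : (k < 3)%N -> [:: c0%:~R; c1%:~R; c2%:~R]`_k = 0 :> 'F_p.
    by move=> k3; have := coef_poly 3 (fun i => [:: c0%:~R; c1%:~R; c2%:~R]`_i : 'F_p) k;
      rewrite -/P P0 coef0 k3 => <-.
  rewrite !(dvdz_pcharf (pchar_Fp pr)).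
  by move: (h 0%N isT) (h 1%N isT) (h 2%N isT) => /= -> -> ->; rewrite eqxx.
have PE : forall x, P.[x] = c0%:~R + x * c1%:~R + x ^+ 2 * c2%:~R.
  move=> x; rewrite horner_poly !big_ord_recr big_ord0 /= expr0 expr1; ring.
set A := [pred r : 'I_p | badf c0 c1 c2 p r].
have -> : (\sum_(r < p) badf c0 c1 c2 p r = #|A|)%N.
  rewrite -sum1_card [RHS]big_mkcond /=; apply: eq_bigr => r _; rewrite inE; by case: (badf _ _ _ _ _).
rewrite cardE.
pose rs := map (fun r : 'I_p => (val r)%:R : 'F_p) (enum A).
have := @max_poly_roots _ P rs Pn0.
have szP : (size P <= 3)%N by apply: size_poly.
rewrite size_map => H.
have : (size (enum A) < size P)%N.
  apply: H.
    apply/allP => x /mapP [r rin ->].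
    rewrite /root PE -badf_F //.
    by move: rin; rewrite mem_enum inE.
  rewrite map_inj_uniq ?enum_uniq // => r1 r2 e.
  have := congr1 (fun x : 'F_p => x : nat) e.
  rewrite /= !val_Fp_nat // !modn_small //.
  by move/val_inj.
move=> h; exact: (leq_trans h szP).
Qed.

Definition mm (M : 'M[int]_3) (i j : nat) : int := M (inord i) (inord j).
Lemma mmE (M : 'M[int]_3) (i j : 'I_3) : M i j = mm M i j.
Proof. by rewrite /mm !inord_val. Qed.
Definition vv (n : nat) (x : 'cV[int]_n.+1) (i : nat) : int := x (inord i) 0.
Arguments vv {n}.
Lemma vvE n (x : 'cV[int]_n.+1) (i : 'I_n.+1) : x i 0 = vv x i.
Proof. by rewrite /vv !inord_val. Qed.
Definition ww (M : 'M[int]_2) (i j : nat) : int := M (inord i) (inord j).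
Lemma wwE (M : 'M[int]_2) (i j : 'I_2) : M i j = ww M i j.
Proof. by rewrite /ww !inord_val. Qed.

Lemma det3 (M : 'M[int]_3) : \det M =
  mm M 0 0 * (mm M 1 1 * mm M 2 2 - mm M 1 2 * mm M 2 1)
  - mm M 0 1 * (mm M 1 0 * mm M 2 2 - mm M 1 2 * mm M 2 0)
  + mm M 0 2 * (mm M 1 0 * mm M 2 1 - mm M 1 1 * mm M 2 0).
Proof.
rewrite (expand_det_row _ ord0) !big_ord_recr !big_ord0 /= /cofactor.
rewrite !(expand_det_row _ ord0) !big_ord_recr !big_ord0 /= /cofactor.
rewrite !det_mx11 !mxE /= !mmE /bump /=.
ring.
Qed.

Definition symm (M : 'M[int]_3) := forall i j, mm M i j = mm M j i.

Lemma symmP (M : 'M[int]_3) : M^T = M -> symm M.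
Proof. by move=> MT i j; rewrite /mm -{1}MT mxE. Qed.

Definition c0 M := mm M 0 0 * mm M 1 1 - mm M 0 1 ^+ 2.
Definition c1 M := 2 * (mm M 1 1 * mm M 0 2 - mm M 0 1 * mm M 1 2).
Definition c2 M := mm M 1 1 * mm M 2 2 - mm M 1 2 ^+ 2.

Definition Mp (M : 'M[int]_3) (a : int) : 'M[int]_2 :=
  \matrix_(i < 2, j < 2)
    if (i == 0 :> nat) && (j == 0 :> nat) then mm M 0 0 + 2 * a * mm M 0 2 + a ^+ 2 * mm M 2 2
    else if (i == 1 :> nat) && (j == 1 :> nat) then mm M 1 1
    else mm M 0 1 + a * mm M 1 2.

Lemma Mp_sym M a : (Mp M a)^T = Mp M a.
Proof. by apply/matrixP => i j; rewrite !mxE andbC [(_ == 1%N) && _]andbC. Qed.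

Lemma det_Mp M (a : nat) : \det (Mp M a%:Z) = fpoly (c0 M) (c1 M) (c2 M) a.
Proof.
rewrite (expand_det_row _ ord0) !big_ord_recr !big_ord0 /= /cofactor.
rewrite !det_mx11 !mxE /= /fpoly /c0 /c1 /c2; ring.
Qed.

Lemma det_bad M p : symm M -> prime p -> p != 2%N -> ~~ (p%:Z %| \det M)%Z ->
  ~~ [&& (p%:Z %| c0 M)%Z, (p%:Z %| c1 M)%Z & (p%:Z %| c2 M)%Z].
Proof.
move=> sy pr p2; apply: contra => /and3P [].
rewrite !(dvdz_pcharf (pchar_Fp pr)) => /eqP h0 /eqP h1 /eqP h2.
have key : (\det M) ^+ 2 = c2 M * ((mm M 0 0 * mm M 2 2 - mm M 0 2 ^+ 2) * c0 M
   - (mm M 0 1 * mm M 0 2 - mm M 0 0 * mm M 1 2) ^+ 2)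
   - c0 M * (mm M 1 2 * mm M 0 2 - mm M 0 1 * mm M 2 2) ^+ 2
   + (mm M 0 1 * mm M 1 2 - mm M 1 1 * mm M 0 2) *
     (2 * (mm M 1 2 * mm M 0 2 - mm M 0 1 * mm M 2 2) * (mm M 0 1 * mm M 0 2 - mm M 0 0 * mm M 1 2)
      - (mm M 0 0 * mm M 2 2 - mm M 0 2 ^+ 2) * (mm M 0 1 * mm M 1 2 - mm M 1 1 * mm M 0 2)).
  rewrite det3 /c0 /c2 (sy 1%N 0%N) (sy 2%N 0%N) (sy 2%N 1%N); ring.
have hc1 : c1 M = - 2 * (mm M 0 1 * mm M 1 2 - mm M 1 1 * mm M 0 2) by rewrite /c1; ring.
have two : (2 : 'F_p) != 0.
  by rewrite -(dvdn_pcharf (pchar_Fp pr) 2) dvdn_prime2.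
move: h1; rewrite hc1 rmorphM /= => /eqP; rewrite mulf_eq0 => /orP [|/eqP hA].
  by rewrite rmorphN /= oppr_eq0 (negbTE two).
move: key.
set X := (_ * c0 M - _).
set Y := (_ - _) ^+ 2.
set Z := (2 * _ * _ - _).
set A := (mm M 0 1 * mm M 1 2 - mm M 1 1 * mm M 0 2) in hA *.
move=> /(congr1 (fun z : int => z%:~R : 'F_p)).
rewrite /= rmorphXn rmorphD rmorphB !rmorphM /= h0 h2 hA.
rewrite !(mul0r, mulr0, subr0, sub0r, add0r, addr0, oppr0) => /eqP.
by rewrite expf_eq0.
Qed.

End PB.
Import PB.

Module PC.
Local Open Scope ring_scope.

Lemma plane_good (M : 'M[int]_3) (q : nat) : M^T = M -> coprimez (\det M) q -> odd q ->
  exists a : nat, (a < 9 ^ size (primes q))%N /\ coprimez (\det (Mp M a%:Z)) q.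
Proof.
move=> MT cop oq.
have sy := @symmP M MT.
have q0 : (0 < q)%N by move: oq; case: (q).
set bad := badf (c0 M) (c1 M) (c2 M).
have ok : sieve_ok bad (primes q).
  move=> p; rewrite mem_primes => /and3P [pr _ pq].
  have p2 : p != 2%N by apply/eqP => e; move: pq; rewrite e dvdn2 oq.
  split => //.
  - by have := prime_gt1 pr; lia.
  - apply: badf_rho => //; apply: det_bad => //.
    rewrite dvdzE /=; apply/negP => pd.
    move: cop; rewrite coprimezE /= => cop.
    have := coprime_dvdl pd cop; rewrite prime_coprime // pq //.
  - by move=> a; apply: badf_per.
have [j /andP [jlt gj]] := @sieve_exists bad (primes q) (primes_uniq q) ok.
exists j; split => //.
rewrite det_Mp coprimezE /=.
set f := fpoly _ _ _ _.
rewrite /coprime.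
set g := gcdn _ _.
have g0 : (0 < g)%N by rewrite gcdn_gt0 q0 orbT.
apply/eqP; suff : ~ (1 < g)%N by lia.
move=> g1.
have pr := pdiv_prime g1.
have pg := pdiv_dvd g.
have pq : (pdiv g %| q)%N := dvdn_trans pg (dvdn_gcdr _ _).
have pf : (pdiv g %| `|f|)%N := dvdn_trans pg (dvdn_gcdl _ _).
have pin : pdiv g \in primes q by rewrite mem_primes pr q0 pq.
move: gj => /allP /(_ _ pin) /negP; case.
by rewrite /bad /badf -/f dvdzE.
Qed.

End PC.
Import PC.

Module PE.

Lemma prod_succ_fact k : (\prod_(i < k) i.+1 = k`!)%N.
Proof. by elim: k => [|k IH]; rewrite ?big_ord0 // big_ord_recr /= IH factS mulnC. Qed.

Lemma fact_le_path s b : path ltn b s -> (\prod_(i < size s) (b + i.+1) <= \prod_(x <- s) x)%N.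
Proof.
elim: s b => [|x s IH] b /=; first by rewrite big_ord0 big_nil.
move=> /andP [bx ps].
rewrite big_ord_recl big_cons /=.
apply: leq_mul; first by lia.
apply: leq_trans (IH x ps).
apply: leq_prod => i _; rewrite /bump /=; lia.
Qed.

Lemma fact_primes_le q : (0 < q)%N -> ((size (primes q))`! <= q)%N.
Proof.
move=> q0.
have p0 : path ltn 0 (primes q).
  have := sorted_primes q; have : forall p, p \in primes q -> (0 < p)%N.
    by move=> p; rewrite mem_primes => /and3P [pr _ _]; apply: prime_gt0.
  case: (primes q) => //= x s H ->; rewrite andbT; apply: H; exact: mem_head.
have := @fact_le_path (primes q) 0 p0; rewrite -prod_succ_fact.
move=> H; apply: leq_trans H _.
rewrite {2}(prod_prime_decomp q0) prime_decompE big_map /=.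
rewrite [X in (X <= _)%N]big_seq [X in (_ <= X)%N]big_seq.
apply: leq_prod => p; rewrite mem_primes => /and3P [pr _ pq].
rewrite -{1}(expn1 p) leq_pexp2l ?prime_gt1 //.
  exact: prime_gt0.
by rewrite -pfactor_dvdn ?expn1.
Qed.

Lemma pow_le_fact m k : (m ^ k <= m ^ m * k`!)%N.
Proof.
elim: k => [|k IH]; first by rewrite expn0 fact0 muln1 expn_gt0; case: m.
case: (leqP m k) => mk.
  rewrite expnS factS mulnCA mulnC.
  rewrite [X in (_ <= X)%N]mulnC; apply: leq_mul => //; lia.
apply: leq_trans (leq_pmulr _ (fact_gt0 _)).
by rewrite leq_pexp2l //; lia.
Qed.

End PE.
Import PE.

Module PD.
Local Open Scope ring_scope.

Definition Lv (a : int) (y : 'cV[int]_2) : 'cV[int]_3 :=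
  \col_(i < 3) (if (i == 0 :> nat) then vv y 0 else if (i == 1 :> nat) then vv y 1 else a * vv y 0).

Lemma qf_Lv M a y : symm M -> qform M (Lv a y) = qform (Mp M a) y.
Proof.
move=> sy; rewrite /qform.
rewrite !mxE !big_ord_recr !big_ord0 /=.
rewrite !mxE !big_ord_recr !big_ord0 /=.
rewrite !mxE /= !mmE !vvE /=.
rewrite (sy 1%N 0%N) (sy 2%N 0%N) (sy 2%N 1%N).
ring.
Qed.

Lemma Lv_neq0 a y : y != 0 -> Lv a y != 0.
Proof.
apply: contra => /eqP L0.
have h0 : vv y 0 = 0.
  by have := congr1 (fun m : 'cV_3 => m (inord 0) 0) L0; rewrite !mxE inordK.
have h1 : vv y 1 = 0.
  by have := congr1 (fun m : 'cV_3 => m (inord 1) 0) L0; rewrite !mxE inordK.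
apply/eqP/matrixP => i j; rewrite (ord1 j) vvE mxE.
by case: i => [[|[|k]] Hk] //=.
Qed.

Lemma norm_Lv (R : realType) (a : nat) y :
  eucl_norm R (Lv a%:Z y) <= (1 + a%:R) * eucl_norm R y.
Proof.
rewrite /eucl_norm !big_ord_recr !big_ord0 /= !mxE /= !vvE /=.
have a0 : (0 : R) <= 1 + a%:R by rewrite addr_ge0 ?ler0n.
rewrite -[1 + a%:R](ger0_norm a0) -sqrtr_sqr -sqrtrM ?sqr_ge0 //.
rewrite ler_sqrt; last first.
  by rewrite mulr_ge0 ?sqr_ge0 // !addr_ge0 // ?lexx // ler0z sqr_ge0.
rewrite !rmorphXn /= !rmorphM /=.
set u := (vv y 0)%:~R : R; set v := (vv y 1)%:~R : R.
have -> : (a%:Z)%:~R = a%:R :> R by [].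
have : (0 : R) <= a%:R by apply: ler0n.
set b := a%:R : R => b0.
nra.
Qed.

Set Implicit Arguments. Unset Strict Implicit.
Section Anal.
Variable R : realType.
Local Open Scope classical_set_scope.

Definition Sset (n : nat) (M : 'M[int]_n) (q : nat) :=
  [set x : 'cV[int]_n | x != 0 /\ exists t : int, (qform M x == t ^+ 2 %[mod q%:Z])%Z].

Arguments Sset {n}.
Lemma mhatE n (M : 'M[int]_n) q : mhat R M q = inf [set eucl_norm R x | x in Sset M q].
Proof. by []. Qed.

Lemma norm_ge0 n (x : 'cV[int]_n) : 0 <= eucl_norm R x.
Proof. exact: sqrtr_ge0. Qed.

Lemma img_lb n (M : 'M[int]_n) q : has_lbound [set eucl_norm R x | x in Sset M q].
Proof. by exists 0 => y [x _ <-]; apply: norm_ge0. Qed.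

Lemma mhat_le n (M : 'M[int]_n) q x : Sset M q x -> mhat R M q <= eucl_norm R x.
Proof. by move=> Sx; have h := ge_inf (img_lb M q); apply: h; exists x. Qed.

Definition e0 (q : nat) : 'cV[int]_2 := \col_(i < 2) (if (i == 0 :> nat) then q%:Z else 0).

Lemma e0_in (M : 'M[int]_2) q : (0 < q)%N -> Sset M q (e0 q).
Proof.
move=> q0; split.
  apply/eqP => /matrixP /(_ ord0 ord0); rewrite !mxE /= => /eqP.
  by move=> /eqP [q00]; move: q0; rewrite q00.
exists 0; rewrite expr0n /= mod0z.
have -> : qform M (e0 q) = (ww M 0 0 * q%:Z) * q%:Z.
  rewrite /qform !mxE !big_ord_recr !big_ord0 /=.
  rewrite !mxE !big_ord_recr !big_ord0 /= !mxE /= !wwE /=; ring.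
by rewrite modzMl.
Qed.

Lemma e0_norm q : eucl_norm R (e0 q) = q%:R.
Proof.
rewrite /eucl_norm !big_ord_recr !big_ord0 /= !mxE /=.
rewrite expr0n /= add0r addr0 rmorphXn /= sqrtr_sqr ger0_norm //.
Qed.

Lemma Sset2_nonempty (M : 'M[int]_2) q : (0 < q)%N ->
  [set eucl_norm R x | x in Sset M q] !=set0.
Proof. by move=> q0; exists (eucl_norm R (e0 q)); exists (e0 q) => //; apply: e0_in. Qed.

Lemma mhat2_le_q (M : 'M[int]_2) q : (0 < q)%N -> mhat R M q <= q%:R.
Proof. by move=> q0; rewrite -(e0_norm q); apply: mhat_le; apply: e0_in. Qed.

Lemma mhat2_ge0 (M : 'M[int]_2) q : (0 < q)%N -> 0 <= mhat R M q.
Proof.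
move=> q0; apply: lb_le_inf; first exact: Sset2_nonempty.
by move=> y [x _ <-]; apply: norm_ge0.
Qed.

Definition Bset (n : nat) (q : nat) :=
  [set M : 'M[int]_n | M^T = M /\ coprimez (\det M) q%:Z].

Lemma Bhat2_ub q : (0 < q)%N -> has_ubound [set mhat R M q | M in @Bset 2 q].
Proof. by move=> q0; exists q%:R => y [M _ <-]; apply: mhat2_le_q. Qed.

Lemma Bhat2_ge (M : 'M[int]_2) (q : nat) : (0 < q)%N -> M^T = M -> coprimez (\det M) q ->
  mhat R M q <= Bhat R 2 q.
Proof. by move=> q0 MT cop; apply: (ub_le_sup (Bhat2_ub q0)); exists M. Qed.

Lemma mhat3_le (M : 'M[int]_3) (q : nat) : M^T = M -> coprimez (\det M) q -> odd q ->
  mhat R M q <= (9 ^ size (primes q))%:R * Bhat R 2 q.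
Proof.
move=> MT cop oq.
have q0 : (0 < q)%N by move: oq; case: (q).
have sy := @symmP M MT.
have [a [alt copa]] := @plane_good M q MT cop oq.
set M' := Mp M a%:Z.
have B2 : mhat R M' q <= Bhat R 2 q by apply: Bhat2_ge => //; apply: Mp_sym.
have m0 := mhat2_ge0 M' q0.
have a0 : (0 : R) < 1 + a%:R by rewrite ltr_pwDl ?ler0n.
have H : mhat R M q <= (1 + a%:R) * mhat R M' q.
  apply/ler_addgt0Pr => e e0.
  have hinf : has_inf [set eucl_norm R x | x in Sset M' q].
    by split; [apply: Sset2_nonempty | apply: img_lb].
  have [_ [y [yn0 [t ht]] <-] ylt] := inf_adherent (divr_gt0 e0 a0) hinf.
  have SL : Sset M q (Lv a%:Z y).
    split; first exact: Lv_neq0.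
    by exists t; rewrite qf_Lv.
  apply: le_trans (mhat_le SL) _.
  apply: le_trans (norm_Lv R a y) _.
  rewrite -/(mhat R M' q) in ylt.
  have : (1 + a%:R) * eucl_norm R y <= (1 + a%:R) * (mhat R M' q + e / (1 + a%:R)).
    by rewrite ler_pM2l // ltW.
  move=> h; apply: le_trans h _.
  rewrite mulrDr mulrCA divff ?mulr1 //; apply/lt0r_neq0 => //.
apply: le_trans H _.
have a9 : (1 + a%:R : R) <= (9 ^ size (primes q))%:R.
  by rewrite addrC natr1 ler_nat; apply: alt.
apply: le_trans (ler_wpM2l (ltW a0) B2) _.
apply: ler_wpM2r; last exact: a9.
exact: le_trans m0 B2.
Qed.

End Anal.

End PD.
Import PD.

Local Open Scope ring_scope.


Theorem lemma4 (R : realType) (eps : R) (heps : 0 < eps) :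
  exists C : R, 0 < C /\
    forall q : nat, odd q -> squarefree q ->
      Bhat R 3 q <= C * (q%:R `^ eps) * Bhat R 2 q.
Proof.
set x0 : R := 9 `^ (eps^-1).
set m := (Num.trunc x0).+1.
have x0m : x0 <= m%:R by apply: ltW; apply: truncnS_gt.
have m9 : (9 : R) <= m%:R `^ eps.
  have -> : (9 : R) = x0 `^ eps by rewrite /x0 -powRrM mulVf ?gt_eqF // powRr1.
  by apply: ge0_ler_powR => //; [apply: ltW | rewrite nnegrE powR_ge0 | rewrite nnegrE ler0n].
exists ((m ^ m)%:R `^ eps); split.
  by apply: powR_gt0; rewrite ltr0n expn_gt0.
move=> q oq _.
have q0 : (0 < q)%N by move: oq; case: (q).
set k := size (primes q).
have B2ge0 : 0 <= Bhat R 2 q.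
  apply: le_trans (mhat2_ge0 R (1%:M : 'M[int]_2) q0) _.
  apply: Bhat2_ge => //; first by rewrite trmx1.
  by rewrite det1 coprimezE /= coprime1n.
have B3 : Bhat R 3 q <= (9 ^ k)%:R * Bhat R 2 q.
  apply: ge_sup.
    exists (mhat R (1%:M : 'M[int]_3) q); exists 1%:M => //; split; first by rewrite trmx1.
    by rewrite det1 coprimezE /= coprime1n.
  by move=> y [M [MT cop] <-]; apply: mhat3_le.
apply: le_trans B3 _.
apply: ler_wpM2r => //.
have m0 : (0 : R) <= m%:R by apply: ler0n.
have h1 : (9 ^ k)%:R <= (m%:R `^ eps) ^+ k :> R.
  by rewrite natrX; apply: lerXn2r => //; rewrite nnegrE ?powR_ge0 //.
apply: le_trans h1 _.
have h2 : (m%:R `^ eps) ^+ k = (m ^ k)%:R `^ eps :> R.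
  rewrite -powR_mulrn ?powR_ge0 // -powRrM mulrC powRrM powR_mulrn //.
  by rewrite natrX.
rewrite h2 -powRM ?ler0n // -natrM.
apply: (ge0_ler_powR (ltW heps)); rewrite ?nnegrE ?ler0n //.
rewrite ler_nat.
apply: leq_trans (pow_le_fact m k) _.
by rewrite leq_mul2l fact_primes_le ?orbT.
Qed.
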